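(* Let $p\in\Delta_7$ have at least one vanishing entry. Then $p\in\operatorname{RBM}_{3,2}$ if and only if for every state $x\in\{0,1\}^3$ with $p_x=0$ there is a Hamming neighbour $y$ of $x$ with $p_y=0$.
   Context: A distribution of three binary random variables is a $2\times2\times2$ tensor $p=(p_x)_{x\in\{0,1\}^3}$ with nonnegative entries summing to $1$; the set of these is $\Delta_7$. Two states are Hamming neighbours if they differ in exactly one coordinate. For $a,b,c\in\mathbb{R}^2_{\ge0}$, $a\otimes b\otimes c$ is the tensor with entries $a_ib_jc_k$. $\operatorname{RBM}_{3,2}$ is the set of $p\in\Delta_7$ of the form $p=(a_1\otimes b_1\otimes c_1+d_1\otimes e_1\otimes f_1)*(a_2\otimes b_2\otimes c_2+d_2\otimes e_2\otimes f_2)$ with all vectors in $\mathbb{R}^2_{\ge0}$, where $*$ is the entrywise (Hadamard) product. *)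

(* Defs.v *)
From Stdlib Require Import Reals.
Open Scope R_scope.

(* States of three binary variables: triples of booleans (false = 0, true = 1). *)
Definition state : Type := (bool * bool * bool)%type.

Definition tensor : Type := state -> R.

(* Vectors in R^2 are functions bool -> R (index false = 1st, true = 2nd entry). *)
Definition vec2 : Type := bool -> R.
Definition nonneg2 (a : vec2) : Prop := 0 <= a false /\ 0 <= a true.

Definition in_simplex (p : tensor) : Prop :=
  (forall x : state, 0 <= p x) /\
  p (false,false,false) + p (false,false,true) + p (false,true,false)
  + p (false,true,true) + p (true,false,false) + p (true,false,true)
  + p (true,true,false) + p (true,true,true) = 1.

Definition outer3 (a b c : vec2) : tensor :=
  fun x => let '(i, j, k) := x in a i * b j * c k.

Definition in_RBM32 (p : tensor) : Prop :=
  in_simplex p /\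
  exists a1 b1 c1 d1 e1 f1 a2 b2 c2 d2 e2 f2 : vec2,
    nonneg2 a1 /\ nonneg2 b1 /\ nonneg2 c1 /\ nonneg2 d1 /\ nonneg2 e1 /\ nonneg2 f1 /\
    nonneg2 a2 /\ nonneg2 b2 /\ nonneg2 c2 /\ nonneg2 d2 /\ nonneg2 e2 /\ nonneg2 f2 /\
    forall x : state,
      p x = (outer3 a1 b1 c1 x + outer3 d1 e1 f1 x) * (outer3 a2 b2 c2 x + outer3 d2 e2 f2 x).

Definition hamming_neighbour (x y : state) : Prop :=
  let '(x1, x2, x3) := x in
  let '(y1, y2, y3) := y in
  (y1 = negb x1 /\ y2 = x2 /\ y3 = x3) \/
  (y1 = x1 /\ y2 = negb x2 /\ y3 = x3) \/
  (y1 = x1 /\ y2 = x2 /\ y3 = negb x3).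

(* Main.v *)
Require Import Defs.
From Stdlib Require Import Reals Lra.
Open Scope R_scope.

Definition fact (p : tensor) : Prop :=
  exists a1 b1 c1 d1 e1 f1 a2 b2 c2 d2 e2 f2 : vec2,
    nonneg2 a1 /\ nonneg2 b1 /\ nonneg2 c1 /\ nonneg2 d1 /\ nonneg2 e1 /\ nonneg2 f1 /\
    nonneg2 a2 /\ nonneg2 b2 /\ nonneg2 c2 /\ nonneg2 d2 /\ nonneg2 e2 /\ nonneg2 f2 /\
    forall x : state,
      p x = (outer3 a1 b1 c1 x + outer3 d1 e1 f1 x) * (outer3 a2 b2 c2 x + outer3 d2 e2 f2 x).

Definition cond (p : tensor) : Prop :=
  forall x : state, p x = 0 -> exists y : state, hamming_neighbour x y /\ p y = 0.

Lemma nn (a : vec2) (i : bool) : nonneg2 a -> 0 <= a i.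
Proof. intros [H0 H1]; destruct i; assumption. Qed.

Lemma factor_nb a b c d e f i j k :
  nonneg2 a -> nonneg2 b -> nonneg2 c -> nonneg2 d -> nonneg2 e -> nonneg2 f ->
  outer3 a b c (i,j,k) + outer3 d e f (i,j,k) = 0 ->
  (outer3 a b c (negb i,j,k) + outer3 d e f (negb i,j,k) = 0) \/
  (outer3 a b c (i,negb j,k) + outer3 d e f (i,negb j,k) = 0) \/
  (outer3 a b c (i,j,negb k) + outer3 d e f (i,j,negb k) = 0).
Proof.
  intros Ha Hb Hc Hd He Hf H. unfold outer3 in *. cbv beta iota in *.
  assert (P1 : 0 <= a i * b j * c k)
    by (repeat apply Rmult_le_pos; apply nn; assumption).
  assert (P2 : 0 <= d i * e j * f k)
    by (repeat apply Rmult_le_pos; apply nn; assumption).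
  assert (Z1 : a i * b j * c k = 0) by lra.
  assert (Z2 : d i * e j * f k = 0) by lra.
  apply Rmult_integral in Z1; destruct Z1 as [Z1|Z1];
  [apply Rmult_integral in Z1; destruct Z1 as [Z1|Z1]|];
  (apply Rmult_integral in Z2; destruct Z2 as [Z2|Z2];
  [apply Rmult_integral in Z2; destruct Z2 as [Z2|Z2]|]);
  first [ left; rewrite Z1, Z2; ring
        | right; left; rewrite Z1, Z2; ring
        | right; right; rewrite Z1, Z2; ring ].
Qed.

Lemma per_k u v w : 0 <= u -> 0 <= v -> 0 <= w -> (w = 0 -> u = 0 \/ v = 0) ->
  exists c c' f f', 0 <= c /\ 0 <= c' /\ 0 <= f /\ 0 <= f' /\
    f * c' = u /\ c * f' = v /\ c * c' = w.
Proof.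
  intros Hu Hv Hw H. destruct Hw as [Hw|Hw].
  - exists w, 1, u, (v / w). repeat split; try lra.
    + unfold Rdiv; apply Rmult_le_pos; [lra|]; left; apply Rinv_0_lt_compat; lra.
    + field; lra.
  - destruct (H (eq_sym Hw)) as [H0|H0].
    + exists 1, 0, 0, v. repeat split; lra.
    + exists 0, 1, u, 0. repeat split; lra.
Qed.

Lemma caseA (r : tensor) : (forall x, 0 <= r x) ->
  r (false,false,false) = 0 -> r (false,false,true) = 0 ->
  (r (true,true,false) = 0 -> r (false,true,false) = 0 \/ r (true,false,false) = 0) ->
  (r (true,true,true) = 0 -> r (false,true,true) = 0 \/ r (true,false,true) = 0) ->
  fact r.
Proof.
  intros Hn Z0 Z1 K0 K1.
  destruct (per_k _ _ _ (Hn (false,true,false)) (Hn (true,false,false)) (Hn (true,true,false)) K0)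
    as [c0 [c0' [f0 [f0' [P1 [P2 [P3 [P4 [E1 [E2 E3]]]]]]]]]].
  destruct (per_k _ _ _ (Hn (false,true,true)) (Hn (true,false,true)) (Hn (true,true,true)) K1)
    as [c1 [c1' [f1 [f1' [Q1 [Q2 [Q3 [Q4 [F1 [F2 F3]]]]]]]]]].
  exists (fun b : bool => if b then 1 else 0), (fun _ : bool => 1), (fun b : bool => if b then c1 else c0),
    (fun b : bool => if b then 0 else 1), (fun b : bool => if b then 1 else 0), (fun b : bool => if b then f1 else f0),
    (fun _ : bool => 1), (fun b : bool => if b then 1 else 0), (fun b : bool => if b then c1' else c0'),
    (fun b : bool => if b then 1 else 0), (fun b : bool => if b then 0 else 1), (fun b : bool => if b then f1' else f0').
  unfold nonneg2; repeat split; try lra.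
  intros [[[|] [|]] [|]]; unfold outer3; cbv beta iota;
  first [ rewrite Z0; ring | rewrite Z1; ring | rewrite <- E1; ring | rewrite <- E2; ring
        | rewrite <- E3; ring | rewrite <- F1; ring | rewrite <- F2; ring | rewrite <- F3; ring ].
Qed.

Lemma caseB (r : tensor) : (forall x, 0 <= r x) ->
  r (false,false,false) = 0 -> r (false,false,true) = 0 ->
  r (true,true,false) = 0 -> r (true,true,true) = 0 -> fact r.
Proof.
  intros Hn Z0 Z1 Z2 Z3.
  exists (fun b : bool => if b then 0 else 1), (fun b : bool => if b then 1 else 0),
    (fun b : bool => r (false,true,b)),
    (fun b : bool => if b then 1 else 0), (fun b : bool => if b then 0 else 1),
    (fun b : bool => r (true,false,b)),
    (fun _ : bool => 1), (fun _ : bool => 1), (fun _ : bool => 1), (fun _ : bool => 0), (fun _ : bool => 0), (fun _ : bool => 0).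
  unfold nonneg2; repeat split; try lra; try apply Hn.
  intros [[[|] [|]] [|]]; unfold outer3; cbv beta iota;
  first [ rewrite Z0; ring | rewrite Z1; ring | rewrite Z2; ring | rewrite Z3; ring | ring ].
Qed.
Definition sw12 (x : state) : state := let '(i,j,k) := x in (j,i,k).
Definition sw13 (x : state) : state := let '(i,j,k) := x in (k,j,i).
Definition sw23 (x : state) : state := let '(i,j,k) := x in (i,k,j).
Definition fl (t1 t2 t3 : bool) (x : state) : state :=
  let '(i,j,k) := x in (xorb i t1, xorb j t2, xorb k t3).

Ltac dall := repeat match goal with
  | b : bool |- _ => destruct b
  | x : state |- _ => destruct x as [[? ?] ?]
  | x : (bool * bool)%type |- _ => destruct x
  end.

Ltac hsolve := simpl in *;
  repeat match goal with H : _ \/ _ |- _ => destruct H end;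
  repeat match goal with H : _ /\ _ |- _ => destruct H end;
  try discriminate;
  first [ left; repeat split; reflexivity
        | right; left; repeat split; reflexivity
        | right; right; repeat split; reflexivity ].

Lemma hn_sw12 x y : hamming_neighbour (sw12 x) y -> hamming_neighbour x (sw12 y).
Proof. intro H; dall; hsolve. Qed.
Lemma hn_sw13 x y : hamming_neighbour (sw13 x) y -> hamming_neighbour x (sw13 y).
Proof. intro H; dall; hsolve. Qed.
Lemma hn_sw23 x y : hamming_neighbour (sw23 x) y -> hamming_neighbour x (sw23 y).
Proof. intro H; dall; hsolve. Qed.
Lemma hn_fl t1 t2 t3 x y : hamming_neighbour (fl t1 t2 t3 x) y ->
  hamming_neighbour x (fl t1 t2 t3 y).
Proof. intro H; dall; hsolve. Qed.

Lemma sw12K x : sw12 (sw12 x) = x. Proof. dall; reflexivity. Qed.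
Lemma sw13K x : sw13 (sw13 x) = x. Proof. dall; reflexivity. Qed.
Lemma sw23K x : sw23 (sw23 x) = x. Proof. dall; reflexivity. Qed.
Lemma flK t1 t2 t3 x : fl t1 t2 t3 (fl t1 t2 t3 x) = x. Proof. dall; reflexivity. Qed.

Lemma cond_tr (g : state -> state) (p : tensor) :
  (forall x, g (g x) = x) ->
  (forall x y, hamming_neighbour (g x) y -> hamming_neighbour x (g y)) ->
  cond p -> cond (fun x => p (g x)).
Proof.
  intros K Hh H x Hx. destruct (H _ Hx) as [y [Hn Hy]].
  exists (g y). split; [apply Hh; exact Hn | rewrite K; exact Hy].
Qed.

Lemma nn_fl (a : vec2) t : nonneg2 a -> nonneg2 (fun i => a (xorb i t)).
Proof. intros [H0 H1]; destruct t; split; simpl; assumption. Qed.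

Ltac fact_tr H :=
  destruct H as [a1 [b1 [c1 [d1 [e1 [f1 [a2 [b2 [c2 [d2 [e2 [f2
    [Ha1 [Hb1 [Hc1 [Hd1 [He1 [Hf1 [Ha2 [Hb2 [Hc2 [Hd2 [He2 [Hf2 Hp]]]]]]]]]]]]]]]]]]]]]]]].

Lemma fact_sw12 p : fact (fun x => p (sw12 x)) -> fact p.
Proof.
  intro H; fact_tr H.
  exists b1, a1, c1, e1, d1, f1, b2, a2, c2, e2, d2, f2.
  repeat (split; [assumption|]).
  intros [[i j] k]. specialize (Hp (j,i,k)). simpl in Hp. rewrite Hp.
  unfold outer3; ring.
Qed.
Lemma fact_sw13 p : fact (fun x => p (sw13 x)) -> fact p.
Proof.
  intro H; fact_tr H.
  exists c1, b1, a1, f1, e1, d1, c2, b2, a2, f2, e2, d2.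
  repeat (split; [assumption|]).
  intros [[i j] k]. specialize (Hp (k,j,i)). simpl in Hp. rewrite Hp.
  unfold outer3; ring.
Qed.
Lemma fact_sw23 p : fact (fun x => p (sw23 x)) -> fact p.
Proof.
  intro H; fact_tr H.
  exists a1, c1, b1, d1, f1, e1, a2, c2, b2, d2, f2, e2.
  repeat (split; [assumption|]).
  intros [[i j] k]. specialize (Hp (i,k,j)). simpl in Hp. rewrite Hp.
  unfold outer3; ring.
Qed.
Lemma fact_fl t1 t2 t3 p : fact (fun x => p (fl t1 t2 t3 x)) -> fact p.
Proof.
  intro H; fact_tr H.
  exists (fun i => a1 (xorb i t1)), (fun i => b1 (xorb i t2)), (fun i => c1 (xorb i t3)),
    (fun i => d1 (xorb i t1)), (fun i => e1 (xorb i t2)), (fun i => f1 (xorb i t3)),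
    (fun i => a2 (xorb i t1)), (fun i => b2 (xorb i t2)), (fun i => c2 (xorb i t3)),
    (fun i => d2 (xorb i t1)), (fun i => e2 (xorb i t2)), (fun i => f2 (xorb i t3)).
  repeat (split; [apply nn_fl; assumption|]).
  intros x. specialize (Hp (fl t1 t2 t3 x)). rewrite flK in Hp. rewrite Hp.
  dall; unfold outer3; simpl; reflexivity.
Qed.
Lemma nb110 r : cond r -> r (true,true,false) = 0 ->
  r (false,true,false) = 0 \/ r (true,false,false) = 0 \/ r (true,true,true) = 0.
Proof.
  intros Hc H. destruct (Hc _ H) as [[[[|] [|]] [|]] [Hn Hy]]; simpl in Hn;
  destruct Hn as [[? [? ?]]|[[? [? ?]]|[? [? ?]]]]; try discriminate; tauto.
Qed.
Lemma nb111 r : cond r -> r (true,true,true) = 0 ->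
  r (false,true,true) = 0 \/ r (true,false,true) = 0 \/ r (true,true,false) = 0.
Proof.
  intros Hc H. destruct (Hc _ H) as [[[[|] [|]] [|]] [Hn Hy]]; simpl in Hn;
  destruct Hn as [[? [? ?]]|[[? [? ?]]|[? [? ?]]]]; try discriminate; tauto.
Qed.

Lemma key r : (forall x, 0 <= r x) -> r (false,false,false) = 0 -> r (false,false,true) = 0 ->
  cond r -> fact r.
Proof.
  intros Hn Z0 Z1 Hc.
  destruct (Req_dec (r (true,true,false)) 0) as [z0|z0];
  destruct (Req_dec (r (true,true,true)) 0) as [z1|z1].
  - apply caseB; assumption.
  - apply caseA; auto.
    + intros _. destruct (nb110 r Hc z0) as [?|[?|?]]; tauto.
    + intros; contradiction.
  - apply caseA; auto.
    + intros; contradiction.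
    + intros _. destruct (nb111 r Hc z1) as [?|[?|?]]; tauto.
  - apply caseA; auto; intros; contradiction.
Qed.

Theorem mainTheorem8 (p : tensor) :
  in_simplex p ->
  (exists x : state, p x = 0) ->
  (in_RBM32 p <->
   forall x : state, p x = 0 -> exists y : state, hamming_neighbour x y /\ p y = 0).
Proof.
  intros Hs [x0 Hx0]. split.
  - intros [_ H]. fact_tr H. intros [[i j] k] Hx.
    rewrite Hp in Hx. apply Rmult_integral in Hx. destruct Hx as [H|H];
    [ apply factor_nb in H; auto | apply factor_nb in H; auto ];
    destruct H as [H|[H|H]];
    first [ exists (negb i, j, k); split; [simpl; left; auto | rewrite Hp, H; ring]
          | exists (i, negb j, k); split; [simpl; right; left; auto | rewrite Hp, H; ring]
          | exists (i, j, negb k); split; [simpl; right; right; auto | rewrite Hp, H; ring] ].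
  - intro Hc. split; [exact Hs|]. change (fact p).
    destruct Hs as [Hn _].
    destruct x0 as [[t1 t2] t3].
    apply (fact_fl t1 t2 t3).
    set (q := fun x => p (fl t1 t2 t3 x)).
    assert (Hq : cond q) by (apply (cond_tr (fl t1 t2 t3) p); [apply flK | apply hn_fl | exact Hc]).
    assert (Hqn : forall x, 0 <= q x) by (intro; apply Hn).
    assert (Q0 : q (false,false,false) = 0)
      by (unfold q; rewrite <- Hx0; destruct t1, t2, t3; reflexivity).
    destruct (Hq _ Q0) as [[[[|] [|]] [|]] [Hh Hy]]; simpl in Hh;
    destruct Hh as [[? [? ?]]|[[? [? ?]]|[? [? ?]]]]; try discriminate.
    + apply fact_sw13. apply key.
      * intro; apply Hqn.
      * exact Q0.
      * exact Hy.
      * apply (cond_tr sw13 q); [apply sw13K | apply hn_sw13 | exact Hq].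
    + apply fact_sw23. apply key.
      * intro; apply Hqn.
      * exact Q0.
      * exact Hy.
      * apply (cond_tr sw23 q); [apply sw23K | apply hn_sw23 | exact Hq].
    + apply key; assumption.
Qed.
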